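(* Let $\mathcal T$ be a tangle of order $k$ in a connectivity system $(E,\lambda)$ and let $\mathcal S$ be a tree compatible set. Let $n\geq 3$, and let $\Phi=(P_1,\ldots, P_n)$ be an $\mathcal{S}$-tight $k$-flower in $\mathcal{T}$. Let $(R,G)$ be a $\Phi$-minimum $(k,\mathcal{S})$-separation that does not conform with $\Phi$. If $\Phi$ has one $(R,G)$-strong petal, then every petal of $\Phi$ is $(R,G)$-strong.
   Context: A connectivity system is a pair $(E,\lambda)$ with $E$ finite and $\lambda$ an integer-valued symmetric submodular function on subsets of $E$. $X$ is $k$-separating if $\lambda(X)\le k$; a $k$-separation is an unordered partition $(X,E-X)$ with $\lambda(X)\le k$. A tangle of order $k$ is a collection $\mathcal T$ of subsets of $E$ with (T1) $\lambda(A)<k$ for $A\in\mathcal T$; (T2) if $\lambda(A)\le k-1$ then $A$ or $E-A$ is in $\mathcal T$; (T3) $A\cup B\cup C\ne E$ for $A,B,C\in\mathcal T$; (T4) $E-\{e\}\notin\mathcal T$. A set is $\mathcal T$-weak if contained in a member of $\mathcal T$, otherwise $\mathcal T$-strong; partitions/$k$-separations are $\mathcal T$-strong if all parts are. A $\mathcal T$-strong $k$-separating $X$ is fully closed if $X\cup Y$ is not $k$-separating for every nonempty $\mathcal T$-weak $Y\subseteq E-X$; $\mathrm{fcl}_{\mathcal T}(X)$ is the intersection of all fully closed $k$-separating sets containing $X$. $\mathcal T$-strong $k$-separations $(X,Y),(X',Y')$ are $\mathcal T$-equivalent if $\{\mathrm{fcl}_{\mathcal T}(X),\mathrm{fcl}_{\mathcal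 T}(Y)\}=\{\mathrm{fcl}_{\mathcal T}(X'),\mathrm{fcl}_{\mathcal T}(Y')\}$. $X$ is $\mathcal T$-sequential if it is $k$-separating, $E-X$ is $\mathcal T$-strong and $\mathrm{fcl}_{\mathcal T}(E-X)=E$. Let $\mathcal S$ be a set of non-$\mathcal T$-sequential $k$-separating sets with $\mathcal T$-strong complements; a $(k,\mathcal S)$-separation is a $k$-separation $(X,E-X)$ with $X,E-X\in\mathcal S$. $\mathcal S$ is tree compatible if (S1) any $\mathcal T$-strong $k$-separation $\mathcal T$-equivalent to a $(k,\mathcal S)$-separation is a $(k,\mathcal S)$-separation, and (S2) if $X\in\mathcal S$ and $(Y,E-Y)$ is a $\mathcal T$-strong $k$-separation with $X\subseteq Y$ then $Y\in\mathcal S$. A $k$-flower in $\mathcal T$ is a $\mathcal T$-strong partition $(P_1,\dots,P_n)$ of $E$ with $P_i$ and $P_i\cup P_{i+1}$ $k$-separating for all $i$ (mod $n$); it displays $(X,E-X)$ if $X$ is a union of petals. $\Phi_1\preccurlyeq_{\mathcal S}\Phi_2$ if each $(k,\mathcal S)$-separation displayed by $\Phi_1$ is $\mathcal T$-equivalent to one displayed by $\Phi_2$; equivalence means both directions. $\Phi$ is $\mathcal S$-tight if it is not equivalent to a $k$-flower with fewer petals. A $\mathcal T$-strong $k$-separation $(R,G)$ conforms with $\Phi$ if it is $\mathcal T$-equivalent to a $k$-separation displayed by $\Phi$ or to a $k$-separation $(R',G')$ with $R'$ or $G'$ contained in a petal. $(R,G)$ crosses a set $P$ if $P\cap R$ and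 $P\cap G$ are both nonempty; it strongly crosses $P$ if both are $\mathcal T$-strong, and weakly crosses $P$ if both are $\mathcal T$-weak. A $\mathcal T$-strong $k$-separation is $\Phi$-minimum if, among all $k$-separations $\mathcal T$-equivalent to it, it crosses the minimum number of petals of $\Phi$. A petal is $(R,G)$-strong if it is not crossed or is strongly crossed by $(R,G)$, and $(R,G)$-weak if it is weakly crossed. *)

(* Defs.v *)
From mathcomp Require Import all_boot all_order all_algebra.
Set Implicit Arguments. Unset Strict Implicit. Unset Printing Implicit Defensive.
Import Order.TTheory GRing.Theory Num.Theory.
Local Open Scope ring_scope.

Section Conn.
Variable E : finType.
Variable lam : {set E} -> int.
Variable k : int.
Variable T : {set {set E}}.

Definition connectivity_system : Prop :=
  (forall X : {set E}, lam X = lam (~: X)) /\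
  (forall X Y : {set E}, lam (X :|: Y) + lam (X :&: Y) <= lam X + lam Y).

Definition is_tangle : Prop :=
  [/\ (forall A, A \in T -> lam A < k),
      (forall A, lam A <= k - 1 -> (A \in T) \/ (~: A \in T)),
      (forall A B C, A \in T -> B \in T -> C \in T -> A :|: B :|: C != setT)
    & (forall e : E, ~: [set e] \notin T)].

Definition ksep (X : {set E}) : bool := lam X <= k.

Definition weak (Y : {set E}) : bool := [exists A in T, Y \subset A].
Definition strong (Y : {set E}) : bool := ~~ weak Y.

(* (X, E - X) is a T-strong k-separation *)
Definition strong_ksep (X : {set E}) : bool :=
  [&& ksep X, strong X & strong (~: X)].

Definition fully_closed (X : {set E}) : bool :=
  [&& strong X, ksep X &
      [forall Y : {set E},
         ((Y \subset ~: X) && (Y != set0) && weak Y) ==> ~~ ksep (X :|: Y)]].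

Definition fcl (X : {set E}) : {set E} :=
  \bigcap_(F | fully_closed F && (X \subset F)) F.

Definition tequiv (X X' : {set E}) : Prop :=
  [/\ strong_ksep X, strong_ksep X' &
      [set fcl X; fcl (~: X)] = [set fcl X'; fcl (~: X')]].

Definition sequential (X : {set E}) : bool :=
  [&& ksep X, strong (~: X) & fcl (~: X) == setT].

Variable S : {set {set E}}.

Definition S_admissible : Prop :=
  forall X, X \in S -> [/\ ksep X, ~~ sequential X & strong (~: X)].

Definition kS_sep (X : {set E}) : bool :=
  [&& ksep X, X \in S & ~: X \in S].

Definition tree_compatible : Prop :=
  [/\ S_admissible,
      (forall X X', kS_sep X' -> tequiv X X' -> kS_sep X)
    & (forall X Y, X \in S -> strong_ksep Y -> X \subset Y -> Y \in S)].

(* flowers, given as maps 'I_n -> {set E} (petals P_1 .. P_n, indices mod n) *)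
Definition kflower (n : nat) (P : 'I_n -> {set E}) : Prop :=
  [/\ (forall i j, i != j -> [disjoint P i & P j]),
      \bigcup_(i < n) P i = setT,
      (forall i, strong (P i))
    & (forall i, ksep (P i) && ksep (P i :|: P (ordS i)))].

Definition displays (n : nat) (P : 'I_n -> {set E}) (X : {set E}) : bool :=
  [exists I : {set 'I_n}, X == \bigcup_(i in I) P i].

Definition flower_le (n m : nat) (P : 'I_n -> {set E}) (Q : 'I_m -> {set E}) : Prop :=
  forall X, kS_sep X -> displays P X -> exists2 Y, displays Q Y & tequiv X Y.

Definition flower_equiv (n m : nat) (P : 'I_n -> {set E}) (Q : 'I_m -> {set E}) : Prop :=
  flower_le P Q /\ flower_le Q P.

Definition S_tight (n : nat) (P : 'I_n -> {set E}) : Prop :=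
  ~ exists m (Q : 'I_m -> {set E}), [/\ (m < n)%N, kflower Q & flower_equiv P Q].

Definition conforms (n : nat) (P : 'I_n -> {set E}) (R : {set E}) : Prop :=
  (exists2 X : {set E}, displays P X & tequiv R X) \/
  (exists2 X : {set E}, (exists i, (X \subset P i) || (~: X \subset P i)) & tequiv R X).

Definition crosses (R Q : {set E}) : bool :=
  (Q :&: R != set0) && (Q :&: ~: R != set0).
Definition strongly_crosses (R Q : {set E}) : bool :=
  [&& crosses R Q, strong (Q :&: R) & strong (Q :&: ~: R)].
Definition weakly_crosses (R Q : {set E}) : bool :=
  [&& crosses R Q, weak (Q :&: R) & weak (Q :&: ~: R)].

Definition ncross (n : nat) (P : 'I_n -> {set E}) (R : {set E}) : nat :=
  #|[set i | crosses R (P i)]|.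

Definition phi_minimum (n : nat) (P : 'I_n -> {set E}) (R : {set E}) : Prop :=
  strong_ksep R /\ (forall R', tequiv R' R -> (ncross P R <= ncross P R')%N).

Definition petal_strong (R Q : {set E}) : bool :=
  ~~ crosses R Q || strongly_crosses R Q.
Definition petal_weak (R Q : {set E}) : bool := weakly_crosses R Q.

End Conn.

(* Main.v *)
Require Import Defs.
From mathcomp Require Import all_boot all_order all_algebra zify.
Set Implicit Arguments. Unset Strict Implicit. Unset Printing Implicit Defensive.
Import Order.TTheory GRing.Theory Num.Theory.
Lemma modS_eq {n a : nat} : (a < n)%N -> (a.+1 %% n = if a.+1 == n then 0 else a.+1)%N.
Proof. move=> h. case: eqP => [->|ne]; first by rewrite modnn. rewrite modn_small //. lia. Qed.
Lemma modS_lt {n a : nat} : (a < n)%N -> (a.+1 %% n < n)%N.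
Proof. move=> h; rewrite ltn_mod; lia. Qed.
Lemma ordSS_neq (n a : nat) : (3 <= n)%N -> (a < n)%N -> ((a.+1 %% n).+1 %% n != a)%N.
Proof. move=> h1 h2. have h3 := modS_lt h2. rewrite (modS_eq h3) (modS_eq h2).
 apply/eqP; case: (a.+1 == n) /eqP => e; case: eqP => /=; lia. Qed.
Ltac kill_ifs := repeat match goal with |- context [if ?c then _ else _] =>
   lazymatch c with context [if _ then _ else _] => fail | _ => case: (c) /eqP end end.
Lemma lift_ordS {n} (j : 'I_n) (t : 'I_n.-1) : (3 <= n)%N ->
  lift j (ordS t) = if ordS (lift j t) == j then ordS j else ordS (lift j t).
Proof.
move=> hn. have ht : (val t < n.-1)%N := ltn_ord t. have hj : (val j < n)%N := ltn_ord j.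
have e1 : val (ordS t) = if (val t).+1 == n.-1 then 0 else (val t).+1 by rewrite /= modS_eq.
have e2 : forall x : 'I_n.-1, val (lift j x) = ((val j <= val x) + val x)%N by [].
have e3 : forall x : 'I_n, val (ordS x) = if (val x).+1 == n then 0 else (val x).+1.
  by move=> x; rewrite /= modS_eq.
apply: val_inj. rewrite -(inj_eq val_inj) fun_if !e3 !e2 e1.
move: (val t) (val j) ht hj => a J ha hJ.
case: (J <= a)%N /ssrnat.leP => h2; kill_ifs; case: ssrnat.leP; lia.
Qed.


Lemma adjacent n (p : 'I_n -> bool) i0 j0 : p i0 -> ~~ p j0 ->
  exists t, p t && ~~ p (ordS t).
Proof.
move=> pi0 npj0.
case: (boolP [exists t, p t && ~~ p (ordS t)]) => [/existsP[t h]|/existsPn H]; first by exists t.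
exfalso.
have step : forall t, p t -> p (ordS t) by move=> t pt; move: (H t); rewrite pt /= negbK.
have it : forall d, p (iter d (@ordS n) i0) by elim => //= d IH; apply: step.
have hv : forall d, nat_of_ord (iter d (@ordS n) i0) = ((i0 + d) %% n)%N.
  elim => [|d IH] /=; first by rewrite addn0 modn_small.
  by rewrite IH addnS -addn1 modnDml addn1.
have e : iter (j0 + n - i0) (@ordS n) i0 = j0.
  apply: val_inj; rewrite /= hv.
  have -> : (i0 + (j0 + n - i0) = j0 + n)%N by have := ltn_ord i0; lia.
  by rewrite modnDr modn_small.
by move: (it (j0 + n - i0)%N); rewrite e (negbTE npj0).
Qed.

Local Open Scope ring_scope.


Ltac bsolve :=
  repeat match goal with |- context [?x \in ?A] => case: (x \in A) end;
  rewrite /=; intros;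
  repeat match goal with H : is_true true -> _ |- _ => specialize (H isT) end;
  try done.

Section Main.
Variable E : finType.
Variable lam : {set E} -> int.
Variable k : int.
Variable T : {set {set E}}.
Hypothesis Hcs : connectivity_system lam.
Hypothesis Htg : is_tangle lam k T.
Hypothesis HT0 : T != set0.

Implicit Types X Y Z F A M R Q : {set E}.
Local Notation weak := (weak T).
Local Notation strong := (strong T).
Local Notation ksep := (ksep lam k).
Local Notation fcl := (fcl lam k T).
Local Notation fully_closed := (fully_closed lam k T).
Local Notation strong_ksep := (strong_ksep lam k T).
Local Notation tequiv := (tequiv lam k T).

Lemma lamC X : lam (~: X) = lam X.
Proof. by case: Hcs => h _; rewrite -h. Qed.

Lemma submod X Y : lam (X :|: Y) + lam (X :&: Y) <= lam X + lam Y.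
Proof. by case: Hcs => _ h. Qed.

Lemma lamT_le X : lam setT <= lam X.
Proof.
have := submod X (~: X). rewrite setUCr setICr lamC.
have -> : lam set0 = lam setT by rewrite -lamC setC0.
lia.
Qed.

Lemma weak_sub X Y : X \subset Y -> weak Y -> weak X.
Proof.
move=> sXY /existsP[A /andP[AT sYA]]; apply/existsP; exists A.
by rewrite AT (subset_trans sXY sYA).
Qed.

Lemma strong_sup X Y : X \subset Y -> strong X -> strong Y.
Proof. by move=> sXY; apply: contra; apply: weak_sub. Qed.

Lemma weak0 : weak set0.
Proof.
case/set0Pn: HT0 => A AT; apply/existsP; exists A; by rewrite AT sub0set.
Qed.

Lemma strong_neq0 X : strong X -> X != set0.
Proof. by apply: contraNneq => ->; exact: weak0. Qed.

Lemma inT_weak A : A \in T -> weak A.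
Proof. by move=> AT; apply/existsP; exists A; rewrite AT subxx. Qed.

Lemma strongT : strong setT.
Proof.
apply/negP=> /existsP[A /andP[AT]]; rewrite subTset => /eqP eA.
case: Htg => _ _ h3 _; have := h3 A A A AT AT AT; by rewrite eA !setUT eqxx.
Qed.

Lemma F1 X : strong X -> strong (~: X) -> k <= lam X.
Proof.
move=> sX sXc; rewrite leNgt; apply/negP => lt.
case: Htg => _ h2 _ _.
have : lam X <= k - 1 by lia.
case/h2 => /inT_weak w; [by move: sX; rewrite /Defs.strong w | by move: sXc; rewrite /Defs.strong w].
Qed.

Lemma fc_ksep F : fully_closed F -> ksep F.
Proof. by case/and3P. Qed.

Lemma fc_strong F : fully_closed F -> strong F.
Proof. by case/and3P. Qed.

Lemma fc_compl F : fully_closed F -> F != setT -> strong (~: F).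
Proof.
move=> fcF nT; apply/negP => wc.
case/and3P: (fcF) => _ kF /forallP /(_ (~: F)).
rewrite subxx /= wc andbT setUCr.
have -> : (~: F != set0) by apply: contra nT => /eqP h; rewrite -[F]setCK h setC0.
rewrite /Defs.ksep; move/negP; apply.
move: kF; rewrite /Defs.ksep; have := lamT_le F; lia.
Qed.

Lemma fcl_eq X Z : strong X -> X \subset Z -> weak (Z :\: X) -> ksep Z -> fcl X = fcl Z.
Proof.
move=> sX sXZ wZX kZ; rewrite /Defs.fcl; apply: eq_bigl => F.
case fF: (fully_closed F) => //=.
apply/idP/idP => [sXF|sZF]; last exact: subset_trans sXZ sZF.
case: (eqVneq F setT) => [->|nT]; first exact: subsetT.
have sFc := fc_compl fF nT.
apply/negPn/negP => nsZF.
case/and3P: (fF) => _ kF /forallP /(_ (Z :\: F)).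
have -> : Z :\: F \subset ~: F by apply/subsetP=> x; rewrite !inE => /andP[].
have -> : Z :\: F != set0 by rewrite setD_eq0.
have -> : weak (Z :\: F).
  apply: weak_sub wZX; apply/subsetP=> x; rewrite !inE => /andP[nF ->]; rewrite andbT.
  by apply: contra nF; apply: (subsetP sXF).
rewrite /= => /negP; apply.
have -> : F :|: Z :\: F = F :|: Z by apply/setP=> x; rewrite !inE; case: (x \in F); case: (x \in Z).
have h1 : k <= lam (F :&: Z).
  apply: F1.
    apply: strong_sup sX; by rewrite subsetI sXF sXZ.
  apply: strong_sup sFc; by rewrite setCS subsetIl.
have := submod F Z; move: kF kZ; rewrite /Defs.ksep; lia.
Qed.

Lemma fclT : fcl setT = setT.
Proof.
apply/setP=> x; rewrite inE; apply/bigcapP => F /andP[_]; rewrite subTset => /eqP ->.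
by rewrite inE.
Qed.

Lemma sksC X : strong_ksep (~: X) = strong_ksep X.
Proof. rewrite /Defs.strong_ksep /Defs.ksep lamC setCK. by case: (lam X <= k); case: (Defs.strong T X); case: (Defs.strong T (~: X)). Qed.

Lemma tequiv_refl X : strong_ksep X -> tequiv X X.
Proof. by move=> h; split. Qed.

Lemma tequiv_sym X Y : tequiv X Y -> tequiv Y X.
Proof. by case=> a b c; split. Qed.

Lemma tequivC X Y : tequiv X Y -> tequiv (~: X) (~: Y).
Proof.
case=> a b c; split; rewrite ?sksC //.
by rewrite !setCK setUC c setUC.
Qed.

Lemma tequivI X Y : strong_ksep X -> strong_ksep Y -> fcl X = fcl Y ->
  fcl (~: X) = fcl (~: Y) -> tequiv X Y.
Proof. by move=> a b c d; split; rewrite // c d. Qed.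

Lemma fcl_eq2 X M Z : strong X -> X \subset M -> M \subset Z ->
  weak (M :\: X) -> weak (Z :\: M) -> ksep M -> ksep Z -> fcl X = fcl Z.
Proof.
move=> sX sXM sMZ w1 w2 kM kZ.
rewrite (fcl_eq sX sXM w1 kM); apply: fcl_eq => //; exact: strong_sup sX.
Qed.

Lemma ksepC X : ksep (~: X) = ksep X.
Proof. by rewrite /Defs.ksep lamC. Qed.

Lemma sks_strong X : strong_ksep X -> strong X.
Proof. by case/and3P. Qed.
Lemma sks_strongC X : strong_ksep X -> strong (~: X).
Proof. by case/and3P. Qed.
Lemma sks_ksep X : strong_ksep X -> ksep X.
Proof. by case/and3P. Qed.

Lemma sks_lam X : strong_ksep X -> lam X = k.
Proof.
move=> h; have := F1 (sks_strong h) (sks_strongC h); have := sks_ksep h.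
rewrite /Defs.ksep; lia.
Qed.

Lemma lamT_k X : ksep X -> ksep setT.
Proof. rewrite /Defs.ksep; have := lamT_le X; lia. Qed.

Variable S : {set {set E}}.
Hypothesis Htc : tree_compatible lam k T S.
Local Notation kS_sep := (kS_sep lam k S).

Lemma admS X : X \in S -> [/\ ksep X, ~~ sequential lam k T X & strong (~: X)].
Proof. by case: Htc => h _ _; apply: h. Qed.

Lemma kS_sks X : kS_sep X -> strong_ksep X.
Proof.
case/and3P => kX XS XcS.
case: (admS XS) => _ _ s1; case: (admS XcS) => _ _; rewrite setCK => s2.
by rewrite /Defs.strong_ksep kX s1 s2.
Qed.

Lemma kS_C X : kS_sep (~: X) = kS_sep X.
Proof. rewrite /Defs.kS_sep /Defs.ksep lamC setCK. by case: (lam X <= k); case: (X \in S); case: (~: X \in S). Qed.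

Lemma kS_fcl X : kS_sep X -> fcl X != setT.
Proof.
move=> h; have hs := kS_sks h; case/and3P: h => _ _ XcS.
case: (admS XcS) => kXc nseq _.
by move: nseq; rewrite /Defs.sequential setCK kXc (sks_strong hs).
Qed.

Lemma kS_fclC X : kS_sep X -> fcl (~: X) != setT.
Proof. by rewrite -kS_C; exact: kS_fcl. Qed.

Variable n : nat.
Variable P : 'I_n -> {set E}.
Hypothesis Hfl : kflower lam k T P.
Hypothesis Hn : (3 <= n)%N.

Lemma pdisj i j : i != j -> [disjoint P i & P j].
Proof. by case: Hfl => h _ _ _; apply: h. Qed.

Lemma pcover x : exists i, x \in P i.
Proof.
case: Hfl => _ h _ _; have : x \in \bigcup_(i < n) P i by rewrite h inE.
by case/bigcupP => i _ xi; exists i.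
Qed.

Lemma pstrong i : strong (P i).
Proof. by case: Hfl => _ _ h _. Qed.

Lemma pksep i : ksep (P i).
Proof. by case: Hfl => _ _ _ /(_ i) /andP[]. Qed.

Lemma pksep2 i : ksep (P i :|: P (ordS i)).
Proof. by case: Hfl => _ _ _ /(_ i) /andP[]. Qed.

Lemma ordS_neq (i : 'I_n) : ordS i != i.
Proof.
rewrite -(inj_eq val_inj) /= modS_eq //; apply/eqP; case: eqP => /=; lia.
Qed.

Lemma ordSS_neq' (i : 'I_n) : ordS (ordS i) != i.
Proof. rewrite -(inj_eq val_inj) /=; exact: ordSS_neq. Qed.

Lemma pdisjS i : [disjoint P i & P (ordS i)].
Proof. by apply: pdisj; rewrite eq_sym ordS_neq. Qed.

Lemma psubC i j : i != j -> P j \subset ~: P i.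
Proof. by move/pdisj; rewrite disjoint_sym disjoints_subset. Qed.

Lemma pstrongC i : strong (~: P i).
Proof. apply: strong_sup (pstrong (ordS i)); apply: psubC; by rewrite eq_sym ordS_neq. Qed.

Lemma plam i : k <= lam (P i).
Proof. exact: F1 (pstrong i) (pstrongC i). Qed.

Lemma ksepT : ksep setT.
Proof. exact: lamT_k (pksep (Ordinal (leq_trans (isT : (0 < 3)%N) Hn))). Qed.

Lemma psks i : strong_ksep (P i).
Proof. by rewrite /Defs.strong_ksep pksep pstrong pstrongC. Qed.

Lemma triple a : ksep (P a :|: P (ordS a) :|: P (ordS (ordS a))).
Proof.
have e : (P a :|: P (ordS a)) :&: (P (ordS a) :|: P (ordS (ordS a))) = P (ordS a).
  apply/setP=> x; rewrite !inE.
  have h := disjointFr (pdisj (ordSS_neq' a)) (x:=x).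
  case xa: (x \in P a); case xb: (x \in P (ordS a)); case xc: (x \in P (ordS (ordS a))) => //=.
  by rewrite (h xc) in xa.
have := submod (P a :|: P (ordS a)) (P (ordS a) :|: P (ordS (ordS a))).
have e2 : (P a :|: P (ordS a)) :|: (P (ordS a) :|: P (ordS (ordS a))) =
  P a :|: P (ordS a) :|: P (ordS (ordS a)).
  by apply/setP=> x; rewrite !inE; case: (x \in P a); case: (x \in P (ordS a)).
rewrite e e2.
have := plam (ordS a); have := pksep2 a; have := pksep2 (ordS a).
rewrite /Defs.ksep; lia.
Qed.

Definition partition m (Q : 'I_m -> {set E}) :=
  (forall i j, i != j -> [disjoint Q i & Q j]) /\ (forall x, exists i, x \in Q i).

Lemma displays_resp m (Q : 'I_m -> {set E}) : partition Q -> forall X,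
  displays Q X = [forall s, (Q s \subset X) || (Q s \subset ~: X)].
Proof.
case=> hd hc X; apply/idP/idP.
  case/existsP => I /eqP ->; apply/forallP => s.
  case sI: (s \in I); first by rewrite (bigcup_sup _ sI).
  apply/orP; right; apply/subsetP => x xs; rewrite inE; apply/bigcupP => [[t tI xt]].
  have nts : t != s by apply: contraTneq tI => ->; rewrite sI.
  by have := disjointFr (hd _ _ nts) xt; rewrite xs.
move/forallP => H; apply/existsP; exists [set s | Q s \subset X]; apply/eqP/setP => x.
apply/idP/idP => [xX|].
  case: (hc x) => i xi; apply/bigcupP; exists i => //; rewrite inE.
  case/orP: (H i) => // /subsetP /(_ x xi); by rewrite inE xX.
by case/bigcupP => s; rewrite inE => /subsetP h /h.
Qed.

Lemma displays_coarse m m' (Q : 'I_m -> {set E}) (Q' : 'I_m' -> {set E}) :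
  partition Q -> partition Q' -> (forall s, exists t, Q s \subset Q' t) ->
  forall X, displays Q' X -> displays Q X.
Proof.
move=> pQ pQ' hc X; rewrite (displays_resp pQ) (displays_resp pQ') => /forallP H.
apply/forallP => s; case: (hc s) => t st.
by case/orP: (H t) => h; rewrite (subset_trans st h) ?orbT.
Qed.

Lemma displaysC m (Q : 'I_m -> {set E}) X : partition Q -> displays Q X -> displays Q (~: X).
Proof.
move=> pQ; rewrite !(displays_resp pQ) => /forallP H; apply/forallP => s.
by rewrite setCK orbC; apply: H.
Qed.

Lemma pP : partition P.
Proof. split; [exact: pdisj | exact: pcover]. Qed.

Lemma resp_case X s : displays P X -> (P s \subset X) \/ (P s \subset ~: X).
Proof. by rewrite (displays_resp pP) => /forallP /(_ s) /orP. Qed.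

Lemma kfl_partition m (Q : 'I_m -> {set E}) : kflower lam k T Q -> partition Q.
Proof.
case=> hd hc _ _; split => // x.
have : x \in \bigcup_(i < m) Q i by rewrite hc inE.
by case/bigcupP => i _ xi; exists i.
Qed.

Hypothesis Htight : S_tight lam k T S P.

Lemma not_tight m (Q : 'I_m -> {set E}) : (m < n)%N -> kflower lam k T Q ->
  (forall s, exists t, P s \subset Q t) ->
  (forall X, kS_sep X -> displays P X -> exists2 Y, displays Q Y & tequiv X Y) -> False.
Proof.
move=> mn kQ hc H; apply: Htight; exists m, Q; split => //; split => //.
move=> X kX dX; exists X; last exact: tequiv_refl (kS_sks kX).
exact: displays_coarse pP (kfl_partition kQ) hc X dX.
Qed.

Definition P2 (i : 'I_n) : 'I_2 -> {set E} := fun t => if t == ord0 then P i else ~: P i.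

Lemma P2_kflower i : kflower lam k T (P2 i).
Proof.
split.
- move=> t t'; case: t => [[|[|//]]] ?; case: t' => [[|[|//]]] ? //= _;
  rewrite /P2 /= ?disjoints_subset ?setCK //; exact: subxx.
- apply/setP => x; rewrite inE; apply/bigcupP.
  case xi: (x \in P i).
    by exists ord0 => //; rewrite /P2 eqxx.
  by exists (Ordinal (isT : (1 < 2)%N)) => //; rewrite /P2 /= inE xi.
- move=> t; case: t => [[|[|//]]] ? ; rewrite /P2 /=; [exact: pstrong | exact: pstrongC].
- move=> t; apply/andP; split.
    case: t => [[|[|//]]] ? ; rewrite /P2 /= ?ksepC; exact: pksep.
  have -> : P2 i t :|: P2 i (ordS t) = setT.
    case: t => [[|[|//]]] ?; apply/setP => x; rewrite /P2 /= !inE; by case: (x \in P i).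
  exact: ksepT.
Qed.

Lemma P2_coarse i s : exists t, P s \subset P2 i t.
Proof.
case: (eqVneq s i) => [->|ne].
  by exists ord0; rewrite /P2 eqxx subxx.
by exists (Ordinal (isT : (1 < 2)%N)); rewrite /P2 /=; apply: psubC; rewrite eq_sym.
Qed.

Lemma P2_disp i (b : bool) : displays (P2 i) (if b then P i else ~: P i).
Proof.
rewrite (displays_resp (kfl_partition (P2_kflower i))); apply/forallP => t.
case: t => [[|[|//]]] ?; case: b; rewrite /P2 /= ?setCK; apply/orP;
  by [left; exact: subxx | right; exact: subxx].
Qed.

Lemma two_not_tight i :
  (forall X, kS_sep X -> displays P X -> P i \subset X -> tequiv X (P i)) -> False.
Proof.
move=> H; apply: (@not_tight 2 (P2 i)) => //; [exact: P2_kflower | exact: P2_coarse|].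
move=> X kX dX; case: (resp_case i dX) => h.
  by exists (P i); [exact: (P2_disp i true) | exact: H].
exists (~: P i); first exact: (P2_disp i false).
rewrite -[X]setCK; apply: tequivC; apply: H; rewrite ?kS_C //.
exact: displaysC pP dX.
Qed.

Lemma displaysU X Y : displays P X -> displays P Y -> displays P (X :|: Y).
Proof.
rewrite !(displays_resp pP) => /forallP hX /forallP hY; apply/forallP => s.
case/orP: (hX s) => h1; first by rewrite (subset_trans h1 (subsetUl _ _)).
case/orP: (hY s) => h2; first by rewrite (subset_trans h2 (subsetUr _ _)).
by rewrite setCU subsetI h1 h2 orbT.
Qed.

Lemma pdisp s : displays P (P s).
Proof.
rewrite (displays_resp pP); apply/forallP => t.
case: (eqVneq t s) => [->|ne]; first by rewrite subxx.
by rewrite (psubC (i:=s) (j:=t)) ?orbT // eq_sym.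
Qed.

Section Merge.
Variable i : 'I_n.
Local Notation j := (ordS i).

Definition Pm : 'I_n.-1 -> {set E} :=
  fun t => P (lift j t) :|: (if lift j t == i then P j else set0).

Lemma ij_neq : i != j.
Proof. by rewrite eq_sym ordS_neq. Qed.

Lemma Pm_sub t : P (lift j t) \subset Pm t.
Proof. exact: subsetUl. Qed.

Lemma Pm_i t : lift j t = i -> Pm t = P i :|: P j.
Proof. by rewrite /Pm => ->; rewrite eqxx. Qed.

Lemma Pm_ni t : lift j t != i -> Pm t = P (lift j t).
Proof. by rewrite /Pm => /negbTE ->; rewrite setU0. Qed.

Lemma Pm_coarse s : exists t, P s \subset Pm t.
Proof.
case: (unliftP j s) => [t ->|->]; first by exists t; exact: Pm_sub.
case: (unliftP j i) => [t e|e]; last by move: ij_neq; rewrite -e eqxx.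
by exists t; rewrite (Pm_i (esym e)) subsetUr.
Qed.

Lemma Pm_kflower : kflower lam k T Pm.
Proof.
split.
- move=> t t' ne; have ne' : lift j t != lift j t' by apply: contra ne => /eqP /lift_inj ->.
  have nj := neq_lift j t; have nj' := neq_lift j t'.
  rewrite disjoints_subset; apply/subsetP => x; rewrite /Pm !inE.
  case e1: (lift j t == i); case e2: (lift j t' == i); rewrite ?inE ?orbF.
  + by move: ne'; rewrite (eqP e1) (eqP e2) eqxx.
  + move: e1 => /eqP e1; rewrite e1 in ne' *.
    by case/orP => xP; [rewrite (disjointFr (pdisj ne') xP) | rewrite (disjointFr (pdisj nj') xP)].
  + move: e2 => /eqP e2; rewrite e2 in ne' * => xP.
    have nj2 : lift j t != j by rewrite eq_sym.
    by rewrite (disjointFr (pdisj ne') xP) (disjointFr (pdisj nj2) xP).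
  + by move=> xP; rewrite (disjointFr (pdisj ne') xP).
- apply/setP => x; rewrite inE; apply/bigcupP.
  case: (pcover x) => s xs; case: (Pm_coarse s) => t st.
  by exists t => //; apply: (subsetP st).
- move=> t; exact: strong_sup (Pm_sub t) (pstrong _).
- move=> t; apply/andP; split.
    case: (eqVneq (lift j t) i) => e; first by rewrite (Pm_i e); exact: pksep2.
    by rewrite (Pm_ni e); exact: pksep.
  rewrite [Pm (ordS t)]/Pm lift_ordS //.
  case: (eqVneq (ordS (lift j t)) j) => e.
    have li : lift j t = i by apply: ordS_inj.
    rewrite (Pm_i li).
    have -> : (P i :|: P j) :|: (P (ordS j) :|: (if ordS j == i then P j else set0)) =
       P i :|: P (ordS i) :|: P (ordS (ordS i)).
      apply/setP => x; rewrite !inE; case: (ordS j == i); rewrite ?inE;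
      by case: (x \in P i); case: (x \in P j); case: (x \in P (ordS j)).
    exact: triple.
  have ni : lift j t != i by apply: contra e => /eqP ->.
  rewrite (Pm_ni ni).
  case: (eqVneq (ordS (lift j t)) i) => e2.
    have e3 : P j = P (ordS (ordS (lift j t))) by rewrite e2.
    rewrite e3 setUA; exact: triple.
  by rewrite setU0; exact: pksep2.
Qed.

Lemma Pm_disp Y : displays P Y ->
  (P i \subset Y) && (P j \subset Y) || (P i \subset ~: Y) && (P j \subset ~: Y) ->
  displays Pm Y.
Proof.
move=> dY h; rewrite (displays_resp (kfl_partition Pm_kflower)); apply/forallP => t.
case: (eqVneq (lift j t) i) => e.
  by rewrite (Pm_i e) !subUset.
rewrite (Pm_ni e); case: (resp_case (lift j t) dY) => -> //; by rewrite orbT.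
Qed.

Lemma merge_not_tight :
  (forall X, kS_sep X -> displays P X -> P i \subset X -> P j \subset ~: X ->
     tequiv X (X :|: P j)) -> False.
Proof.
move=> H; apply: (@not_tight n.-1 Pm); [|exact: Pm_kflower|exact: Pm_coarse|].
  by case: n Hn => // n' _; rewrite ltnSn.
move=> X kX dX.
case: (resp_case i dX) => hi; case: (resp_case j dX) => hj.
- by exists X; [apply: Pm_disp; rewrite // hi hj | exact: tequiv_refl (kS_sks kX)].
- exists (X :|: P j); last exact: H.
  apply: Pm_disp; first exact: displaysU dX (pdisp _).
  by rewrite (subset_trans hi (subsetUl _ _)) subsetUr.
- exists (~: (~: X :|: P j)).
    apply: Pm_disp; first exact: displaysC pP (displaysU (displaysC pP dX) (pdisp _)).
    by rewrite setCK (subset_trans hi (subsetUl _ _)) subsetUr orbT.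
  rewrite -[X in tequiv X _]setCK; apply: tequivC; apply: H; rewrite ?kS_C ?setCK //.
  exact: displaysC pP dX.
- by exists X; [apply: Pm_disp; rewrite // hi hj orbT | exact: tequiv_refl (kS_sks kX)].
Qed.

End Merge.

Lemma crossesC R Q : crosses (~: R) Q = crosses R Q.
Proof. by rewrite /crosses setCK andbC. Qed.

Lemma ncrossC R : ncross P (~: R) = ncross P R.
Proof. by apply: eq_card => s; rewrite !inE crossesC. Qed.

Lemma ncross_lt R R' : (forall s, crosses R' (P s) -> crosses R (P s)) ->
  (exists s, crosses R (P s) && ~~ crosses R' (P s)) -> (ncross P R' < ncross P R)%N.
Proof.
move=> h [s /andP[c1 c2]]; apply: proper_card; apply/properP; split.
  by apply/subsetP => t; rewrite !inE; apply: h.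
by exists s; rewrite !inE.
Qed.

Lemma phi_minC R : phi_minimum lam k T P R -> phi_minimum lam k T P (~: R).
Proof.
case=> sR H; split; first by rewrite sksC.
move=> R' te; rewrite ncrossC -(ncrossC R'); apply: H.
by rewrite -[R]setCK; apply: tequivC.
Qed.

Lemma ML R j : kS_sep R -> phi_minimum lam k T P R -> crosses R (P j) ->
  weak (P j :&: R) -> ksep (R :\: P j) -> False.
Proof.
move=> kR [sR Hmin] cr wA kR'.
have eA : R :\: (R :\: P j) = P j :&: R.
  by apply/setP => x; rewrite !inE; case: (x \in R); case: (x \in P j).
have eC : ~: (R :\: P j) :\: ~: R = P j :&: R.
  by apply/setP => x; rewrite !inE; case: (x \in R); case: (x \in P j).
have sub1 : ~: R \subset ~: (R :\: P j) by rewrite setCS subsetDl.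
have ksR := sks_ksep sR.
case: (boolP (strong (R :\: P j))) => sR'.
  have sks' : strong_ksep (R :\: P j).
    by rewrite /Defs.strong_ksep kR' sR' (strong_sup sub1 (sks_strongC sR)).
  have te : tequiv (R :\: P j) R.
    refine (tequivI sks' sR _ _).
      by apply: (fcl_eq sR' (subsetDl _ _)); rewrite ?eA.
    by apply: esym; apply: (fcl_eq (sks_strongC sR) sub1); rewrite ?eC ?ksepC.
  have := Hmin _ te; rewrite leqNgt => /negP; apply; apply: ncross_lt.
    move=> s; case: (eqVneq s j) => [->|ne].
      rewrite /crosses; have -> : P j :&: (R :\: P j) = set0
        by apply/setP => x; rewrite !inE; case: (x \in P j); rewrite ?andbF.
      by rewrite eqxx.
    have e1 : P s :&: (R :\: P j) = P s :&: R.
      apply/setP => x; rewrite !inE; case xs: (x \in P s) => //=.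
      by rewrite (disjointFr (pdisj ne) xs).
    have e2 : P s :&: ~: (R :\: P j) = P s :&: ~: R.
      apply/setP => x; rewrite !inE; case xs: (x \in P s) => //=.
      by rewrite (disjointFr (pdisj ne) xs).
    by rewrite /crosses e1 e2.
  exists j; rewrite cr /crosses.
  have -> : P j :&: (R :\: P j) = set0
        by apply/setP => x; rewrite !inE; case: (x \in P j); rewrite ?andbF.
  by rewrite eqxx.
move: sR'; rewrite negbK => wR'.
have : fcl (~: R) = setT.
  rewrite -fclT; apply: fcl_eq2 (sks_strongC sR) sub1 (subsetT _) _ _ _ ksepT.
  - by rewrite eC.
  - by rewrite setTD setCK.
  - by rewrite ksepC.
by move/eqP; apply/negP; apply: kS_fclC.
Qed.

Lemma scrossC R Q : strongly_crosses T (~: R) Q = strongly_crosses T R Q.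
Proof.
rewrite /strongly_crosses crossesC setCK.
by case: (crosses R Q); case: (Defs.strong T (Q :&: R)); case: (Defs.strong T (Q :&: ~: R)).
Qed.

Lemma weakA R j : kS_sep R -> phi_minimum lam k T P R -> crosses R (P j) ->
  weak (P j :&: R) -> weak (P j :&: ~: R) && (lam (P j :&: ~: R) < k).
Proof.
move=> kR pm cr wA; have sR := (let: conj a _ := pm in a).
have key : k <= lam (P j :&: ~: R) -> False.
  move=> h; apply: (ML kR pm cr wA).
  have := submod R (~: P j).
  have -> : R :|: ~: P j = ~: (P j :&: ~: R).
    by apply/setP => x; rewrite !inE; case: (x \in R); case: (x \in P j).
  rewrite !lamC setDE; have := sks_ksep sR; have := pksep j; rewrite /Defs.ksep; lia.
apply/andP; split.
  case: (boolP (weak (P j :&: ~: R))) => // sB; exfalso; apply: key; apply: (F1 sB).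
  apply: strong_sup (sks_strong sR); apply/subsetP => x; rewrite !inE => ->.
  by rewrite andbF.
by rewrite ltNge; apply/negP => /key.
Qed.

Lemma unc_case R i : kS_sep R -> phi_minimum lam k T P R -> P i \subset R ->
  crosses R (P (ordS i)) -> weak (P (ordS i) :&: ~: R) -> False.
Proof.
move=> kR pm sub cr wB; have sR := (let: conj a _ := pm in a).
apply: (ML (R := ~: R) (j := ordS i));
  [by rewrite kS_C | exact: phi_minC | by rewrite crossesC | by [] | ].
have -> : ~: R :\: P (ordS i) = ~: (R :|: (P i :|: P (ordS i))).
  apply/setP => x; rewrite !inE; move: (subsetP sub x).
  by case: (x \in P i); case: (x \in R); case: (x \in P (ordS i)) => //= /(_ isT).
rewrite ksepC.
have h1 : k <= lam (R :&: (P i :|: P (ordS i))).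
  apply: F1.
    by apply: strong_sup (pstrong i); rewrite subsetI sub subsetUl.
  by apply: strong_sup (sks_strongC sR); rewrite setCS subsetIl.
have := submod R (P i :|: P (ordS i)); have := sks_ksep sR; have := pksep2 i.
rewrite /Defs.ksep; lia.
Qed.

Lemma RPi_k R i : strong_ksep R -> strongly_crosses T R (P i) -> ksep (R :|: P i).
Proof.
move=> sR /and3P[_ sC sD].
have h : k <= lam (R :&: P i).
  apply: F1; first by rewrite setIC.
  by apply: strong_sup sD; apply/subsetP => x; rewrite !inE; case: (x \in R); case: (x \in P i).
have := submod R (P i); have := sks_ksep sR; have := pksep i; rewrite /Defs.ksep; lia.
Qed.

Lemma fclPj R j : weak (P j :&: R) -> lam (P j :&: ~: R) <= k -> weak (P j :&: ~: R) ->
  fcl (~: P j) = setT.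
Proof.
move=> wA lB wB; rewrite -fclT.
apply: (@fcl_eq2 _ (~: (P j :&: ~: R))) ksepT.
- exact: pstrongC.
- by rewrite setCS subsetIl.
- exact: subsetT.
- have -> : ~: (P j :&: ~: R) :\: ~: P j = P j :&: R.
    by apply/setP => x; rewrite !inE; case: (x \in P j); case: (x \in R).
  exact: wA.
- by rewrite setTD setCK.
- by rewrite ksepC /Defs.ksep.
Qed.

Lemma merge_eq R i : strongly_crosses T R (P i) ->
  weak (P (ordS i) :&: R) -> weak (P (ordS i) :&: ~: R) -> fcl (~: P (ordS i)) = setT ->
  ksep (R :&: (P i :|: P (ordS i))) ->
  forall X, kS_sep X -> displays P X -> P i \subset X -> P (ordS i) \subset ~: X ->
  tequiv X (X :|: P (ordS i)).
Proof.
set j := ordS i => scr wA wB fPj kRQ X kX dX sPi sPj.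
have sX := kS_sks kX.
have hPi := plam i.
have sYc : strong (~: (X :|: P j)).
  case: (boolP (weak (~: (X :|: P j)))) => // wD; exfalso.
  have eD : ~: (X :|: P j) = set0.
    apply/eqP/set0Pn => [[x xD]]; case: (pcover x) => s xs.
    have dD : displays P (~: (X :|: P j)) := displaysC pP (displaysU dX (pdisp j)).
    case: (resp_case s dD) => h.
      by have := pstrong s; rewrite /Defs.strong (weak_sub h wD).
    by have := subsetP h x xs; rewrite inE xD.
  have eX : X = ~: P j.
    apply/setP => x; move/setP: eD => /(_ x); rewrite !inE; move: (subsetP sPj x); rewrite !inE.
    by case: (x \in X); case: (x \in P j) => //= /(_ isT).
  by move: (kS_fcl kX); rewrite eX fPj eqxx.
have kY : ksep (X :|: P j).
  have := submod X (P i :|: P j).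
  have -> : X :|: (P i :|: P j) = X :|: P j.
    by apply/setP => x; rewrite !inE; move: (subsetP sPi x); bsolve.
  have -> : X :&: (P i :|: P j) = P i.
    by apply/setP => x; rewrite !inE; move: (subsetP sPi x) (subsetP sPj x); rewrite ?inE; bsolve.
  have := sks_ksep sX; have := pksep2 i; rewrite -/j /Defs.ksep; lia.
have kXA : ksep (X :|: (P j :&: R)).
  have := submod X (R :&: (P i :|: P j)).
  have -> : X :|: (R :&: (P i :|: P j)) = X :|: (P j :&: R).
    by apply/setP => x; rewrite !inE; move: (subsetP sPi x); rewrite ?inE; bsolve.
  have -> : X :&: (R :&: (P i :|: P j)) = P i :&: R.
    by apply/setP => x; rewrite !inE; move: (subsetP sPi x) (subsetP sPj x); rewrite ?inE; bsolve.
  have hC : k <= lam (P i :&: R).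
    case/and3P: scr => _ sC sD; apply: F1 sC _; apply: strong_sup sD.
    by apply/subsetP => x; rewrite !inE; case: (x \in R); case: (x \in P i).
  have := sks_ksep sX; move: kRQ; rewrite /Defs.ksep; lia.
have sub1 : X :|: (P j :&: R) \subset X :|: P j.
  by apply/setUS; exact: subsetIl.
have sks_Y : strong_ksep (X :|: P j).
  by rewrite /Defs.strong_ksep kY sYc (strong_sup (subsetUl _ _) (sks_strong sX)).
apply: (tequivI sX sks_Y).
  apply: (fcl_eq2 (sks_strong sX) (subsetUl _ _) sub1) => //.
    apply: weak_sub wA; apply/subsetP => x; rewrite !inE.
    by case: (x \in X); case: (x \in P j); case: (x \in R).
  apply: weak_sub wB; apply/subsetP => x; rewrite !inE.
  by case: (x \in X); case: (x \in P j); case: (x \in R).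
apply: esym; apply: (@fcl_eq2 _ (~: (X :|: (P j :&: R))) _ sYc).
- by rewrite setCS.
- by rewrite setCS subsetUl.
- apply: weak_sub wB; apply/subsetP => x; rewrite !inE.
  by case: (x \in X); case: (x \in P j); case: (x \in R).
- apply: weak_sub wA; apply/subsetP => x; rewrite !inE.
  by case: (x \in X); case: (x \in P j); case: (x \in R).
- by rewrite ksepC.
- by rewrite ksepC; exact: sks_ksep sX.
Qed.

Lemma kXR R i X : strong_ksep R -> strongly_crosses T R (P i) -> kS_sep X ->
  P i \subset X -> lam (X :|: R) + k <= lam X + lam (R :|: P i).
Proof.
move=> sR scr kX sPi; have sX := kS_sks kX.
have := submod X (R :|: P i).
have -> : X :|: (R :|: P i) = X :|: R.
  by apply/setP => x; rewrite !inE; move: (subsetP sPi x); bsolve.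
have : k <= lam (X :&: (R :|: P i)).
  apply: F1.
    by apply: strong_sup (pstrong i); rewrite subsetI sPi subsetUr.
  by apply: strong_sup (sks_strongC sX); rewrite setCS subsetIl.
lia.
Qed.

Lemma fclXT R i X : strong_ksep R -> strongly_crosses T R (P i) -> kS_sep X ->
  P i \subset X -> weak (R :\: X) -> weak (~: R :\: X) -> False.
Proof.
move=> sR scr kX sPi w1 w2; have sX := kS_sks kX.
have h := kXR sR scr kX sPi.
have kU : ksep (X :|: R).
  move: (sks_ksep sX) (RPi_k sR scr) h; rewrite /Defs.ksep; lia.
have : fcl X = setT.
  rewrite -fclT; apply: (fcl_eq2 (sks_strong sX) (subsetUl _ R) (subsetT _)) => //.
    apply: weak_sub w1; apply/subsetP => x; rewrite !inE; bsolve.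
  apply: weak_sub w2; apply/subsetP => x; rewrite !inE; bsolve.
  exact: ksepT.
by move/eqP; apply/negP; apply: kS_fcl.
Qed.

Lemma two_aux R i X : strong_ksep R -> strongly_crosses T R (P i) ->
  weak (R :\: (P i :|: P (ordS i))) -> weak (~: R :\: (P i :|: P (ordS i))) ->
  kS_sep X -> P i \subset X -> P (ordS i) \subset ~: X -> strong (~: R :\: X) ->
  tequiv X (P i).
Proof.
set j := ordS i => sR scr wU wV kX sPi sPj sGX.
have sX := kS_sks kX.
have h := kXR sR scr kX sPi.
have h1 : k <= lam (X :|: R).
  apply: F1; first exact: strong_sup (subsetUr _ _) (sks_strong sR).
  apply: strong_sup sGX; apply/subsetP => x; rewrite !inE; bsolve.
have kM : ksep (X :&: (R :|: P i)).
  have := submod X (R :|: P i).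
  have -> : X :|: (R :|: P i) = X :|: R.
    by apply/setP => x; rewrite !inE; move: (subsetP sPi x); bsolve.
  move: (sks_ksep sX) (RPi_k sR scr); rewrite /Defs.ksep; lia.
have s1 : P i \subset X :&: (R :|: P i) by rewrite subsetI sPi subsetUr.
have s2 : X :&: (R :|: P i) \subset X by exact: subsetIl.
have w1 : weak ((X :&: (R :|: P i)) :\: P i).
  apply: weak_sub wU; apply/subsetP => x; rewrite !inE; move: (subsetP sPj x); rewrite !inE; bsolve.
have w2 : weak (X :\: (X :&: (R :|: P i))).
  apply: weak_sub wV; apply/subsetP => x; rewrite !inE; move: (subsetP sPj x); rewrite !inE; bsolve.
apply: (tequivI sX (psks i)).
  apply: esym; exact: (fcl_eq2 (pstrong i) s1 s2 w1 w2 kM (sks_ksep sX)).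
apply: (@fcl_eq2 (~: X) (~: (X :&: (R :|: P i))) (~: P i) (sks_strongC sX)).
- by rewrite setCS.
- by rewrite setCS.
- by apply: weak_sub w2; apply/subsetP => x; rewrite !inE; bsolve.
- by apply: weak_sub w1; apply/subsetP => x; rewrite !inE; bsolve.
- by rewrite ksepC.
- by rewrite ksepC; exact: pksep.
Qed.

Lemma two_equiv R i : strong_ksep R -> strongly_crosses T R (P i) ->
  weak (R :\: (P i :|: P (ordS i))) -> weak (~: R :\: (P i :|: P (ordS i))) ->
  forall X, kS_sep X -> displays P X -> P i \subset X -> tequiv X (P i).
Proof.
move=> sR scr wU wV X kX dX sPi.
case: (resp_case (ordS i) dX) => sPj.
  exfalso; apply: (fclXT sR scr kX sPi).
    apply: weak_sub wU; apply/subsetP => x; rewrite !inE;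
    move: (subsetP sPi x) (subsetP sPj x); rewrite ?inE; bsolve.
  apply: weak_sub wV; apply/subsetP => x; rewrite !inE;
  move: (subsetP sPi x) (subsetP sPj x); rewrite ?inE; bsolve.
case: (boolP (strong (~: R :\: X))) => sG; first exact: two_aux sR scr wU wV kX sPi sPj sG.
case: (boolP (strong (R :\: X))) => sRX.
  apply: (two_aux (R := ~: R)); rewrite ?sksC ?scrossC ?setCK //.
exfalso; apply: (fclXT sR scr kX sPi); by rewrite -[weak _]negbK.
Qed.

Lemma main_adj R i : kS_sep R -> phi_minimum lam k T P R ->
  petal_strong T R (P i) -> ~~ petal_strong T R (P (ordS i)) -> False.
Proof.
set j := ordS i => kR pm psi npsj.
have sR := (let: conj a _ := pm in a).
have pmC := phi_minC pm.
have kRC : kS_sep (~: R) by rewrite kS_C.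
move: npsj; rewrite /petal_strong negb_or negbK => /andP[cr nsc].
have crC : crosses (~: R) (P j) by rewrite crossesC.
have wA : weak (P j :&: R).
  case: (boolP (weak (P j :&: R))) => // sA.
  have wB : weak (P j :&: ~: R).
    case: (boolP (weak (P j :&: ~: R))) => // sB.
    by move: nsc; rewrite /strongly_crosses cr /Defs.strong sA sB.
  by case/andP: (weakA kRC pmC crC wB); rewrite setCK => h _; rewrite h in sA.
case/andP: (weakA kR pm cr wA) => wB lB.
have fPj : fcl (~: P j) = setT by apply: (fclPj wA _ wB); lia.
case/orP: psi => [ncr|scr].
  move: ncr; rewrite /crosses negb_and !negbK => /orP[/eqP e|/eqP e].
    have sub : P i \subset ~: R.
      apply/subsetP => x xi; rewrite inE; apply/negP => xR.
      have : x \in P i :&: R by rewrite inE xi xR.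
      by rewrite e inE.
    by apply: (unc_case kRC pmC sub crC); rewrite setCK.
  have sub : P i \subset R.
    apply/subsetP => x xi; apply/negPn/negP => xR.
    have : x \in P i :&: ~: R by rewrite !inE xi xR.
    by rewrite e inE.
  exact: (unc_case kR pm sub cr wB).
case: (boolP (strong (~: R :\: (P i :|: P j)))) => sV.
  apply: (merge_not_tight (i := i)); apply: (merge_eq scr wA wB fPj).
  have := submod R (P i :|: P j).
  have : k <= lam (R :|: (P i :|: P j)).
    apply: F1; first exact: strong_sup (subsetUl _ _) (sks_strong sR).
    apply: strong_sup sV; apply/subsetP => x; rewrite !inE; bsolve.
  have := sks_ksep sR; have := pksep2 i; rewrite -/j /Defs.ksep; lia.
case: (boolP (strong (R :\: (P i :|: P j)))) => sU.
  apply: (merge_not_tight (i := i)); apply: (merge_eq (R := ~: R)); rewrite ?scrossC ?setCK //.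
  have := submod (~: R) (P i :|: P j).
  have : k <= lam (~: R :|: (P i :|: P j)).
    apply: F1; first exact: strong_sup (subsetUl _ _) (sks_strongC sR).
    apply: strong_sup sU; apply/subsetP => x; rewrite !inE; bsolve.
  have := sks_ksep sR; have := pksep2 i; rewrite -/j /Defs.ksep lamC; lia.
apply: (two_not_tight (i := i)); apply: (two_equiv sR scr); by rewrite -[weak _]negbK.
Qed.

End Main.

Theorem lemma5p9 (E : finType) (lam : {set E} -> int) (k : int)
  (T S : {set {set E}}) (n : nat) (P : 'I_n -> {set E}) (R : {set E}) :
  connectivity_system lam ->
  is_tangle lam k T ->
  tree_compatible lam k T S ->
  (3 <= n)%N ->
  kflower lam k T P ->
  S_tight lam k T S P ->
  kS_sep lam k S R ->
  phi_minimum lam k T P R ->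
  ~ conforms lam k T P R ->
  (exists i, petal_strong T R (P i)) ->
  forall i, petal_strong T R (P i).
Proof.
move=> Hcs Htg Htc Hn Hfl Htight kR pm _ [i0 ps0] i.
case: (eqVneq T set0) => [T0|HT0].
  have nw : forall Y : {set E}, Defs.weak T Y = false.
    by move=> Y; rewrite T0; apply/existsP => -[A]; rewrite inE.
  rewrite /petal_strong /strongly_crosses /Defs.strong !nw /=.
  by case: (crosses R (P i)).
apply/negPn/negP => np.
case: (@adjacent n (fun s => petal_strong T R (P s)) i0 i ps0 np) => t /andP[pt npt].
exact: (main_adj Hcs Htg HT0 Htc Hfl Hn Htight kR pm pt npt).
Qed.
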